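(* Let $k$ be a field and let $A$ be a just infinite $k$-algebra that does not satisfy a polynomial identity and is not simple. Then the center $Z(A)$ is a field which is a finite dimensional extension of $k$.
   Context: All rings are associative unital algebras over a field. A $k$-algebra $A$ is called just infinite if $\dim_k(A)=\infty$ and every nonzero two-sided ideal of $A$ has finite codimension in $A$. *)

(* Defs.v *)
From HB Require Import structures.
From mathcomp Require Import all_boot all_order all_algebra.
Set Implicit Arguments. Unset Strict Implicit. Unset Printing Implicit Defensive.
Import Order.TTheory GRing.Theory.
Local Open Scope ring_scope.

Section Defs.
Local Unset Implicit Arguments.
Variable k : fieldType. Variable A : algType k.

Definition lincomb (s : seq A) (c : 'I_(size s) -> k) : A :=
  \sum_(i < size s) c i *: s`_i.

Definition fin_dim : Prop :=
  exists s : seq A, forall a : A, exists c, a = lincomb s c.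

Definition two_sided_ideal (I : A -> Prop) : Prop :=
  [/\ I 0, (forall x y, I x -> I y -> I (x + y)) &
      (forall a x, I x -> I (a * x) /\ I (x * a))].

Definition nonzero_set (I : A -> Prop) : Prop := exists x, I x /\ x != 0.

(* dim_k (A / I) < infinity *)
Definition fin_codim (I : A -> Prop) : Prop :=
  exists s : seq A, forall a : A, exists c, I (a - lincomb s c).

Definition just_infinite : Prop :=
  ~ fin_dim /\
  forall I, two_sided_ideal I -> nonzero_set I -> fin_codim I.

Definition simple_algebra : Prop :=
  (1 : A) != 0 /\
  forall I, two_sided_ideal I -> (forall x, I x -> x = 0) \/ (forall x, I x).

(* A satisfies a polynomial identity: there is a nonzero element f of the
   free algebra k<x_0,...,x_{n-1}> with f(a_0,...,a_{n-1}) = 0 for all a.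
   f is given by a duplicate-free list of words s and coefficients c. *)
Definition satisfies_PI : Prop :=
  exists (n : nat) (s : seq (seq 'I_n)) (c : seq 'I_n -> k),
    [/\ uniq s, (exists2 w, w \in s & c w != 0) &
        forall a : 'I_n -> A, \sum_(w <- s) c w *: \prod_(i <- w) a i = 0].

Definition central (z : A) : Prop := forall a : A, z * a = a * z.

End Defs.
Arguments lincomb {k A} s c.
Arguments fin_dim {k} A.
Arguments two_sided_ideal {k A} I.
Arguments fin_codim {k A} I.
Arguments just_infinite {k} A.
Arguments simple_algebra {k} A.
Arguments satisfies_PI {k} A.
Arguments central {k A} z.

(* Main.v *)
Require Import Defs.
From HB Require Import structures.
From mathcomp Require Import all_boot all_order all_algebra all_fingroup.
From Stdlib Require Import Classical.
Import GRing.Theory.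
Set Implicit Arguments. Unset Strict Implicit. Unset Printing Implicit Defensive.
Local Open Scope ring_scope.

Section Helpers.
Variable k : fieldType.
Variable A : algType k.

Lemma central_add (x y : A) : central x -> central y -> central (x + y).
Proof. by move=> hx hy a; rewrite mulrDl mulrDr hx hy. Qed.
Lemma central_mul (x y : A) : central x -> central y -> central (x * y).
Proof. by move=> hx hy a; rewrite -mulrA hy mulrA hx mulrA. Qed.
Lemma central_scale c (x : A) : central x -> central (c *: x).
Proof. by move=> hx a; rewrite -scalerAl hx scalerAr. Qed.
Lemma central_alg c : central (c%:A : A).
Proof. by move=> a; rewrite mulr_algl mulr_algr. Qed.
Lemma central0 : central (0 : A).
Proof. by move=> a; rewrite mul0r mulr0. Qed.
Lemma central_sum n (F : 'I_n -> A) : (forall i, central (F i)) -> central (\sum_i F i).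
Proof.
move=> h; elim/big_ind: _ => //; [exact: central0| move=> x y; exact: central_add].
Qed.
Lemma central_X (z : A) n : central z -> central (z ^+ n).
Proof. by move=> hz a; symmetry; apply: commrX; exact: esym (hz a). Qed.

Lemma ideal_scale (J : A -> Prop) c x : two_sided_ideal J -> J x -> J (c *: x).
Proof. by case=> _ _ h hx; rewrite -mulr_algl; case: (h (c%:A) x hx). Qed.
Lemma ideal_lmul (J : A -> Prop) a x : two_sided_ideal J -> J x -> J (a * x).
Proof. by case=> _ _ h hx; case: (h a x hx). Qed.
Lemma ideal_rmul (J : A -> Prop) a x : two_sided_ideal J -> J x -> J (x * a).
Proof. by case=> _ _ h hx; case: (h a x hx). Qed.
Lemma ideal_add (J : A -> Prop) x y : two_sided_ideal J -> J x -> J y -> J (x + y).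
Proof. by case=> _ h _; apply: h. Qed.
Lemma ideal0 (J : A -> Prop) : two_sided_ideal J -> J 0.
Proof. by case. Qed.
Lemma ideal_opp (J : A -> Prop) x : two_sided_ideal J -> J x -> J (- x).
Proof. by move=> hJ hx; rewrite -scaleN1r; apply: ideal_scale. Qed.
Lemma ideal_sub (J : A -> Prop) x y : two_sided_ideal J -> J x -> J y -> J (x - y).
Proof. by move=> hJ hx hy; apply: ideal_add => //; apply: ideal_opp. Qed.
Lemma ideal_sum (J : A -> Prop) (I : Type) (r : seq I) (F : I -> A) :
  two_sided_ideal J -> (forall i, J (F i)) -> J (\sum_(i <- r) F i).
Proof.
move=> hJ h; elim/big_ind: _ => //; [exact: ideal0| move=> x y; exact: ideal_add].
Qed.


Definition st m (a : 'I_m -> A) : A :=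
  \sum_(s : 'S_m) ((-1) ^+ s : k) *: \prod_(i < m) a (s i).

Lemma prod_slot (I : eqType) (r : seq I) (i0 : I) (F0 : I -> A) :
  uniq r -> i0 \in r -> exists L R, forall F : I -> A,
    (forall i, i != i0 -> F i = F0 i) -> \prod_(i <- r) F i = L * F i0 * R.
Proof.
elim: r => [|x r IH]; first by rewrite in_nil.
move=> /= /andP [xr ur]; rewrite in_cons.
case: (eqVneq i0 x) => [e _ | ne]; last rewrite /= => ir.
  subst i0.
  exists 1, (\prod_(i <- r) F0 i) => F hF; rewrite big_cons mul1r; congr (_ * _).
  by apply: eq_big_seq => i ii; apply: hF; apply: contraNneq xr => <-.

have [L [R hLR]] := IH ur ir.
exists (F0 x * L), R => F hF; rewrite big_cons hLR // hF; last by rewrite eq_sym.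
by rewrite !mulrA.
Qed.

Definition upd m (a : 'I_m -> A) (k0 : 'I_m) (u : A) : 'I_m -> A :=
  fun i => if i == k0 then u else a i.

Lemma st_ext m (a b : 'I_m -> A) : a =1 b -> st a = st b.
Proof. by move=> h; apply: eq_bigr => s _; congr (_ *: _); apply: eq_bigr. Qed.

Lemma st_lin m (a : 'I_m -> A) k0 : exists L R : 'S_m -> A, forall u,
  st (upd a k0 u) = \sum_(s : 'S_m) L s * u * R s.
Proof.
have h (s : 'S_m) : exists p : A * A, forall F : 'I_m -> A,
    (forall i, i != (s^-1)%g k0 -> F i = a (s i)) ->
    \prod_(i < m) F i = p.1 * F ((s^-1)%g k0) * p.2.
  have [L [R hLR]] := prod_slot (fun i => a (s i)) (index_enum_uniq _) (mem_index_enum ((s^-1)%g k0)).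
  by exists (L, R).
have [p hp] := fin_all_exists h.
exists (fun s : 'S_m => ((-1) ^+ s : k) *: (p s).1), (fun s => (p s).2) => u.
apply: eq_bigr => s _; rewrite (hp s (fun i => upd a k0 u (s i))).
  by rewrite /upd permKV eqxx !scalerAl.
move=> i ne; rewrite /upd; case: eqP => // e; case/eqP: ne.
by rewrite -e (permK s).
Qed.

Lemma st_alt m (a : 'I_m -> A) i1 i2 : i1 != i2 -> a i1 = a i2 -> st a = 0.
Proof.
move=> ne eqa; pose t := tperm i1 i2.
have oddMt s: odd_perm (s * t)%g = ~~ odd_perm s by rewrite odd_permM odd_tperm ne addbT.
rewrite /st (bigID (fun s : 'S_m => odd_perm s)) /=.
apply: (canLR (subrK _)); rewrite add0r -sumrN.
rewrite (reindex_inj (mulIg t)); apply: eq_big => //= s.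
rewrite oddMt => /negPf ->; rewrite expr1 expr0 scaleN1r scale1r; congr (- _).
apply: eq_bigr => /= i _; rewrite permM /t; case: tpermP => // ->.
by rewrite eqa. by rewrite eqa.
Qed.


Lemma st_in_ideal (J : A -> Prop) (t : seq A) m :
  two_sided_ideal J -> (size t < m)%N ->
  (forall x, exists c : 'I_(size t) -> A,
      (forall i, central (c i)) /\ J (x - \sum_i c i * t`_i)) ->
  forall a : 'I_m -> A, J (st a).
Proof.
move=> hJ hm hspan.
suff H : forall n, (n <= m)%N -> forall a : 'I_m -> A,
    (forall i : 'I_m, (n <= i)%N -> exists l : 'I_(size t), a i = t`_l) -> J (st a).
  by move=> a; apply: (H m (leqnn m)) => i; rewrite leqNgt ltn_ord.
elim=> [_|n IH hn] a ha.
  have [f hf] := fin_all_exists (fun i => ha i (leq0n _)).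
  have : ~~ injectiveb f.
    apply/negP => /injectiveP inj; have := leq_card _ inj.
    by rewrite !card_ord leqNgt hm.
  case/injectivePn => i1 [i2 ne e].
  by rewrite (st_alt ne (_ : a i1 = a i2)) ?hf ?e //; apply: ideal0.
pose k0 : 'I_m := Ordinal hn.
have [L [R hLR]] := st_lin a k0.
pose g u := \sum_(s : 'S_m) L s * u * R s.
have gD : {morph g : x y / x + y}.
  by move=> x y; rewrite /g -big_split; apply: eq_bigr => s _; rewrite mulrDr mulrDl.
have g0 : g 0 = 0 by rewrite /g big1 // => s _; rewrite mulr0 mul0r.
have gC c u : central c -> g (c * u) = c * g u.
  move=> hc; rewrite /g mulr_sumr; apply: eq_bigr => s _.
  by rewrite !mulrA hc.
have gJ u : J u -> J (g u).
  move=> hu; apply: ideal_sum => // s; apply: ideal_rmul => //; exact: ideal_lmul.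
have hgt (l : 'I_(size t)) : J (g t`_l).
  rewrite /g -hLR; apply: IH; first exact: ltnW.
  move=> i ni; rewrite /upd; case: eqP => [_|ne]; first by exists l.
  apply: ha; rewrite ltn_neqAle ni andbT; apply/eqP => e; apply: ne.
  by apply: val_inj; rewrite /= e.
have [c [hc hx]] := hspan (a k0).
have -> : st a = g (a k0).
  by rewrite /g -hLR; apply: st_ext => i; rewrite /upd; case: eqP => // ->.
rewrite -(subrK (\sum_i c i * t`_i) (a k0)) gD; apply: ideal_add => //; first exact: gJ.
rewrite (big_morph g gD g0); apply: ideal_sum => // i.
by rewrite gC //; apply: ideal_lmul.
Qed.


Definition word m (p : 'S_m * 'S_m) : seq 'I_(m + m)%N :=
  [seq lshift m (p.1 i) | i <- index_enum 'I_m] ++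
  [seq rshift m (p.2 i) | i <- index_enum 'I_m].

Lemma word_inj m : injective (@word m).
Proof.
move=> [s1 s2] [t1 t2] /eqP; rewrite /word eqseq_cat ?size_map //.
case/andP => /eqP e1 /eqP e2.
have h1 := (proj2 (eq_in_map _ _ _) e1); have h2 := (proj2 (eq_in_map _ _ _) e2).
congr pair; apply/permP => i.
  by apply: (@lshift_inj m m); apply: h1; rewrite mem_index_enum.
by apply: (@rshift_inj m m); apply: h2; rewrite mem_index_enum.
Qed.

Lemma PI_of_st m : (forall a b : 'I_m -> A, st a * st b = 0) -> satisfies_PI A.
Proof.
move=> h.
pose sg (p : 'S_m * 'S_m) : k := (-1) ^+ p.1 * (-1) ^+ p.2.
pose c (w : seq 'I_(m + m)%N) : k := \sum_(p : 'S_m * 'S_m | word p == w) sg p.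
have cw p : c (word p) = sg p.
  rewrite /c (eq_bigl (fun q => q == p)) ?big_pred1_eq // => q.
  by rewrite (inj_eq (@word_inj m)).
exists (m + m)%N, [seq word p | p <- index_enum ('S_m * 'S_m)%type], c; split.
- by rewrite map_inj_uniq ?index_enum_uniq //; apply: word_inj.
- exists (word (1%g, 1%g)); first by apply: map_f; rewrite mem_index_enum.
  by rewrite cw /sg !odd_perm1 expr0 mulr1 oner_eq0.
move=> a; rewrite big_map.
transitivity (st (fun i => a (lshift m i)) * st (fun i => a (rshift m i))); last exact: h.
symmetry; rewrite /st big_distrlr pair_big /=; apply: eq_bigr => p _.
rewrite cw big_cat !big_map /sg -scalerAl -scalerAr scalerA. by [].
Qed.


Lemma dep (K : A -> Prop) (s : seq A) n (v : 'I_n -> A) :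
  two_sided_ideal K -> (size s < n)%N ->
  (forall i, exists c, K (v i - lincomb s c)) ->
  exists c : 'I_n -> k, (exists i, c i != 0) /\ K (\sum_i c i *: v i).
Proof.
move=> hK hn h; have [E hE] := fin_all_exists h.
pose M : 'M[k]_(n, size s) := \matrix_(i, j) E i j.
have nz : kermx M != 0.
  rewrite -mxrank_eq0 mxrank_ker subn_eq0 -ltnNge.
  exact: leq_ltn_trans (rank_leq_col M) hn.
have [i0 [j0 hij]] : exists i j, kermx M i j != 0.
  apply: NNPP => hn0; case/eqP: nz; apply/matrixP => i j; rewrite [in RHS]mxE.
  by apply: NNPP => hne; apply: hn0; exists i, j; apply/eqP.
exists (fun j => kermx M i0 j); split; first by exists j0.
have -> : \sum_i kermx M i0 i *: v i =
   \sum_i kermx M i0 i *: (v i - lincomb s (E i)) + \sum_i kermx M i0 i *: lincomb s (E i).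
  by rewrite -big_split; apply: eq_bigr => i _; rewrite /= -scalerDr subrK.
have -> : \sum_i kermx M i0 i *: lincomb s (E i) = 0.
  rewrite /lincomb; under eq_bigr => i _ do rewrite scaler_sumr.
  rewrite exchange_big big1 // => l _.
  have : (kermx M *m M) i0 l = 0 by rewrite mulmx_ker mxE.
  rewrite mxE => e; rewrite -[RHS](scale0r (s`_l)) -e scaler_suml.
  rewrite /=; apply: eq_bigr => i _; by rewrite scalerA /M mxE.
rewrite /= addr0; apply: ideal_sum => // i; exact: ideal_scale.
Qed.


Lemma horner_inv (z : A) : central z -> (forall x, z * x = 0 -> x = 0) ->
  forall n (c : 'I_n -> k), (exists b, \sum_i c i *: z ^+ i = z ^+ n * b) ->
  (forall i, c i = 0) \/ (exists w, z * w = 1).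
Proof.
move=> hz nzd; elim=> [|n IH] c [b hb]; first by left; case.
rewrite big_ord_recl expr0 exprS -mulrA in hb.
have e2 : \sum_(i < n) c (lift ord0 i) *: z ^+ (lift ord0 i) =
          z * \sum_(i < n) c (lift ord0 i) *: z ^+ i.
  rewrite mulr_sumr; apply: eq_bigr => i _; by rewrite lift0 exprS scalerAr.
rewrite e2 in hb.
case: (eqVneq (c ord0) 0) => [c0|c0].
  rewrite c0 scale0r add0r in hb.
  have hb' : \sum_(i < n) c (lift ord0 i) *: z ^+ i = z ^+ n * b.
    by apply/subr0_eq/nzd; rewrite mulrBr hb subrr.
  case: (IH _ (ex_intro _ b hb')) => [hc|]; last by right.
  by left => i; case: (unliftP ord0 i) => [j ->|->].
right; exists ((c ord0)^-1 *: (z ^+ n * b - \sum_(i < n) c (lift ord0 i) *: z ^+ i)).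
rewrite -scalerAr mulrBr -hb addrK.
by rewrite scalerA mulVf // scale1r.
Qed.


Lemma ji_one : just_infinite A -> (1 : A) != 0.
Proof.
case=> nfd _; apply/eqP => e; apply: nfd; exists [::] => a.
exists (fun i => 0); rewrite /lincomb big1 //; last by case.
by rewrite -[a]mulr1 e mulr0.
Qed.

Lemma codim_spanC (J : A -> Prop) : fin_codim J -> exists t : seq A,
  forall x, exists c : 'I_(size t) -> A,
      (forall i, central (c i)) /\ J (x - \sum_i c i * t`_i).
Proof.
case=> t ht; exists t => x; have [d hd] := ht x.
exists (fun i => (d i)%:A); split => [i|]; first exact: central_alg.
by rewrite /lincomb in hd; under eq_bigr => i _ do rewrite mulr_algl.
Qed.

Lemma not_PI_st (J : A -> Prop) (t : seq A) :
  ~ satisfies_PI A -> two_sided_ideal J ->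
  (forall x, exists c : 'I_(size t) -> A,
      (forall i, central (c i)) /\ J (x - \sum_i c i * t`_i)) ->
  exists x, J x /\ x != 0.
Proof.
move=> nPI hJ hs; apply: NNPP => hn; apply: nPI.
apply: (@PI_of_st (size t).+1) => a b.
have -> : st a = 0.
  apply: NNPP => ne; apply: hn; exists (st a); split => //; last exact/eqP.
  exact: st_in_ideal hJ (ltnSn _) hs a.
by rewrite mul0r.
Qed.

Lemma ji_prime : just_infinite A -> ~ satisfies_PI A ->
  forall x y : A, (forall a, x * a * y = 0) -> x = 0 \/ y = 0.
Proof.
move=> [_ hji] nPI x y hxy; apply: NNPP => hn.
have nx : x != 0 by apply/eqP => e; apply: hn; left.
have ny : y != 0 by apply/eqP => e; apply: hn; right.
pose I1 := fun u : A => forall a, u * a * y = 0.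
pose I2 := fun v : A => forall u, I1 u -> u * v = 0.
have hI1 : two_sided_ideal I1.
  split; first by move=> a; rewrite !mul0r.
    by move=> u v hu hv a; rewrite mulrDl mulrDl hu hv addr0.
  move=> c u hu; split => a; first by rewrite -2!mulrA [u * _]mulrA hu mulr0.
  by rewrite -(mulrA u) hu.
have hI2 : two_sided_ideal I2.
  split; first by move=> u _; rewrite mulr0.
    by move=> u v hu hv w hw; rewrite mulrDr hu // hv // addr0.
  move=> c v hv; split => u hu; last by rewrite mulrA hv // mul0r.
  by rewrite mulrA hv //; apply: (ideal_rmul _ hI1).
have [t1 ht1] := codim_spanC (hji I1 hI1 (ex_intro _ x (conj hxy nx))).
have y2 : I2 y by move=> u hu; have := hu 1; rewrite mulr1.
have [t2 ht2] := codim_spanC (hji I2 hI2 (ex_intro _ y (conj y2 ny))).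
apply: nPI; apply: (@PI_of_st (size t1 + size t2).+1) => a b.
have h1 : I1 (st a).
  by apply: st_in_ideal hI1 _ ht1 a; rewrite ltnS leq_addr.
have h2 : I2 (st b).
  by apply: st_in_ideal hI2 _ ht2 b; rewrite ltnS leq_addl.
exact: h2.
Qed.


Lemma ji_inv : just_infinite A -> ~ satisfies_PI A ->
  forall z : A, central z -> z != 0 -> exists w, z * w = 1.
Proof.
move=> hJI nPI z hz nz; have prime := ji_prime hJI nPI; case: hJI => _ hji.
have nzd x : z * x = 0 -> x = 0.
  move=> zx; case: (prime z x) => [a|e|//]; last by rewrite e eqxx in nz.
  by rewrite hz -mulrA zx mulr0.
pose Jn n := fun x : A => exists b, x = z ^+ n * b.
have hJn n : two_sided_ideal (Jn n).
  split; first by exists 0; rewrite mulr0.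
    by move=> x y [b ->] [b' ->]; exists (b + b'); rewrite mulrDr.
  move=> a x [b ->]; split; last by exists (b * a); rewrite mulrA.
  by exists (a * b); rewrite mulrA -(central_X n hz a) -mulrA.
have [t ht] : exists t : seq A, forall x, exists c : 'I_(size t) -> A,
      (forall i, central (c i)) /\ Jn 1%N (x - \sum_i c i * t`_i).
  apply: codim_spanC; apply: hji (hJn 1%N) _.
  by exists z; split => //; exists 1; rewrite expr1 mulr1.
have hspan n : forall x, exists c : 'I_(size t) -> A,
      (forall i, central (c i)) /\ Jn n (x - \sum_i c i * t`_i).
  elim: n => [|n IH] x.
    exists (fun _ => 0); split => [i|]; first exact: central0.
    by exists x; rewrite big1 ?subr0 ?expr0 ?mul1r // => i _; rewrite mul0r.
  have [c [hc [b hb]]] := IH x; have [d [hd [b' hb']]] := ht b.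
  exists (fun i => c i + z ^+ n * d i); split => [i|].
    by apply: central_add => //; apply: central_mul => //; apply: central_X.
  exists b'.
  have -> : \sum_i (c i + z ^+ n * d i) * t`_i =
            \sum_i c i * t`_i + z ^+ n * \sum_i d i * t`_i.
    rewrite mulr_sumr -big_split; apply: eq_bigr => i _ /=.
    by rewrite mulrDl mulrA.
  by rewrite opprD addrA hb -mulrBr hb' expr1 mulrA -exprSr.
pose K := fun x : A => forall n, Jn n x.
have hK : two_sided_ideal K.
  split; first by move=> n; apply: ideal0.
    by move=> x y hx hy n; apply: ideal_add.
  by move=> a x hx; split => n; [apply: ideal_lmul | apply: ideal_rmul].
have [x0 [Kx0 nx0]] : exists x, K x /\ x != 0.
  apply: NNPP => hn; apply: nPI; apply: (@PI_of_st (size t).+1) => a b.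
  have -> : st a = 0.
    apply: NNPP => ne; apply: hn; exists (st a); split; last exact/eqP.
    by move=> n; apply: st_in_ideal (hJn n) (ltnSn _) (hspan n) a.
  by rewrite mul0r.
have [s hs] := hji K hK (ex_intro _ x0 (conj Kx0 nx0)).
have [c [[i ci] hc]] := @dep K s (size s).+1 (fun i => z ^+ i) hK (ltnSn _) (fun i => hs _).
case: (horner_inv hz nzd (hc (size s).+1)) => [h0|//].
by rewrite h0 eqxx in ci.
Qed.


Lemma max_exists (P : nat -> Prop) N : (forall n, P n -> (n <= N)%N) -> P 0%N ->
  exists n, P n /\ forall m, P m -> (m <= n)%N.
Proof.
move=> hb h0.
have Q j : (exists n, P n /\ forall m, P m -> (m <= n)%N) \/ (exists n, P n /\ (j <= n)%N).
  elim: j => [|j [hl|[n [pn jn]]]]; first by right; exists 0%N.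
    by left.
  case: (classic (exists m, P m /\ (n < m)%N)) => [[m [pm nm]]|nm].
    by right; exists m; split => //; exact: leq_ltn_trans jn nm.
  left; exists n; split => // m pm; rewrite leqNgt; apply/negP => lt.
  by apply: nm; exists m.
case: (Q N.+1) => // [[n [pn hn]]]; have := hb _ pn.
by rewrite leqNgt hn.
Qed.

Lemma lincomb_cons (x : A) (L : seq A) (c : 'I_(size (x :: L)) -> k) :
  lincomb (x :: L) c = c ord0 *: x + lincomb L (fun i => c (lift ord0 i)).
Proof. by rewrite /lincomb /= big_ord_recl. Qed.

Lemma central_lincomb (L : seq A) c : (forall x, x \in L -> central x) -> central (lincomb L c).
Proof.
move=> h; apply: central_sum => i; apply: central_scale; apply: h.
exact: mem_nth.
Qed.

End Helpers.

Theorem proposition2p3 (k : fieldType) (A : algType k) :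
  just_infinite A -> ~ satisfies_PI A -> ~ simple_algebra A ->
  (* Z(A) is a field *)
  ((1 : A) != 0 /\
   forall z : A, central z -> z != 0 ->
     exists w : A, central w /\ z * w = 1 /\ w * z = 1) /\
  (* Z(A) is finite dimensional over k *)
  (exists s : seq A, (forall x, x \in s -> central x) /\
     forall z : A, central z -> exists c, z = lincomb s c).
Proof.
move=> hJI nPI nsimp.
have one := ji_one hJI.
have inv := ji_inv hJI nPI.
have inv' z : central z -> z != 0 -> exists w : A, central w /\ z * w = 1 /\ w * z = 1.
  move=> hz nz; have [w hw] := inv z hz nz.
  have wz : w * z = 1 by rewrite -hz.
  exists w; split => // a.
  by rewrite -[w * a]mulr1 -hw mulrA -(mulrA w a z) -(hz a) mulrA wz mul1r.
split; first by split; [exact: one | exact: inv'].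
have [I [hI [[x0 [Ix0 nx0]] [y0 ny0]]]] :
    exists I : A -> Prop, two_sided_ideal I /\ (exists x, I x /\ x != 0) /\ exists y, ~ I y.
  apply: NNPP => hn; apply: nsimp; split => // I hI.
  case: (classic (forall x, I x -> x = 0)) => [|h1]; first by left.
  right => y; apply: NNPP => ny; apply: hn; exists I; split => //; split; last by exists y.
  apply: NNPP => h2; apply: h1 => x Ix; apply: NNPP => nx; apply: h2; exists x.
  by split => //; apply/eqP.
have ZI0 z : central z -> I z -> z = 0.
  move=> hz Iz; apply: NNPP => nz; have [w hw] := inv z hz (introN eqP nz).
  apply: ny0; rewrite -[y0]mul1r -hw; apply: (ideal_rmul _ hI); exact: ideal_rmul.
have [s hs] := hJI.2 I hI (ex_intro _ x0 (conj Ix0 nx0)).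
pose indep (L : seq A) := forall c, lincomb L c = 0 -> forall i, c i = 0.
pose P n := exists L : seq A, size L = n /\ (forall x, x \in L -> central x) /\ indep L.
have hb n : P n -> (n <= size s)%N.
  move=> [L [<- [hL hi]]]; rewrite leqNgt; apply/negP => lt.
  have [c [[i ci] hc]] := @dep _ _ I s (size L) (fun i => L`_i) hI lt (fun i => hs _).
  have := hi c (ZI0 _ (central_lincomb c hL) hc) i.
  by move/eqP; rewrite (negPf ci).
have P0 : P 0%N.
  by exists [::]; split => //; split => // c _; case.
have [n [[L [hn [hL hi]]] hmax]] := max_exists hb P0.
exists L; split => // z hz.
have : ~ indep (z :: L).
  move=> hi'; suff : P n.+1 by move/hmax; rewrite ltnn.
  exists (z :: L).
  split; first by rewrite /= hn.
  split => // x; rewrite in_cons => /orP [/eqP ->|]; [exact: hz|exact: hL].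
move=> ni; have [c [hc [i ci]]] : exists c, lincomb (z :: L) c = 0 /\ exists i, c i != 0.
  apply: NNPP => hn'; apply: ni => c hc i; apply: NNPP => nci; apply: hn'.
  by exists c; split => //; exists i; apply/eqP.
rewrite lincomb_cons in hc.
case: (eqVneq (c ord0) 0) => [c0|c0].
  rewrite c0 scale0r add0r in hc; have h0 := hi _ hc.
  by move: ci; case: (unliftP ord0 i) => [j ->|->]; rewrite ?h0 ?c0 eqxx.
exists (fun j => - (c ord0)^-1 * c (lift ord0 j)).
rewrite /lincomb; under eq_bigr => j _ do rewrite -scalerA.
rewrite -scaler_sumr -/(lincomb L _).
have -> : lincomb L (fun i => c (lift ord0 i)) = - (c ord0 *: z) by rewrite -(addKr (c ord0 *: z) (lincomb _ _)) hc addr0.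
by rewrite scalerN scaleNr opprK scalerA mulVf // scale1r.
Qed.
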